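(* Let $L$ be a complex Leibniz algebra, let $I$ be the ideal generated by all squares $[x,x]$, $x\in L$, and suppose $L/I\cong\mathfrak{e}(2)$ and $I$, as a right $\mathfrak{e}(2)$-module via $(i,x+I)\mapsto[i,x]$, is isomorphic to the four-dimensional module with basis $X_1,\dots,X_4$ and action $(X_1,p_+)=X_3$, $(X_1,p_-)=-X_4$, $(X_2,p_-)=-X_3$, $(X_1,l)=\tfrac12X_1$, $(X_2,l)=-\tfrac32X_2$, $(X_3,l)=-\tfrac12X_3$, $(X_4,l)=\tfrac32X_4$ (all other products zero). Then there exists a basis $\{l,p_+,p_-,X_1,X_2,X_3,X_4\}$ of $L$ (with $X_i\in I$) in which the only nonzero products are $[l,p_+]=p_+$, $[p_+,l]=-p_+$, $[l,p_-]=-p_-$, $[p_-,l]=p_-$, $[X_1,p_+]=X_3$, $[X_1,p_-]=-X_4$, $[X_2,p_-]=-X_3$, $[X_1,l]=\tfrac12X_1$, $[X_2,l]=-\tfrac32X_2$, $[X_3,l]=-\tfrac12X_3$, $[X_4,l]=\tfrac32X_4$.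
   Context: A (right) Leibniz algebra is a vector space $L$ with a bilinear bracket satisfying $[[x,y],z]=[[x,z],y]+[x,[y,z]]$. The ideal $I$ generated by squares satisfies $[L,I]=0$, so $L/I$ is a Lie algebra and $I$ is a right $L/I$-module via $(i,x+I)\mapsto[i,x]$. $\mathfrak{e}(2)$ is the complex Lie algebra with basis $\{l,p_+,p_-\}$ and brackets $[l,p_+]=p_+$, $[l,p_-]=-p_-$, $[p_+,p_-]=0$. *)

(* Defs.v *)
From mathcomp Require Import all_boot all_order all_algebra.
From mathcomp Require Import reals.
From mathcomp Require Export complex.
Set Implicit Arguments. Unset Strict Implicit. Unset Printing Implicit Defensive.
Import GRing.Theory Num.Theory.
Local Open Scope ring_scope.

Section LeibnizDefs.
Variable C : fieldType.

Definition ev (n : nat) (k : nat) : 'rV[C]_n.+1 := delta_mx 0 (inord k).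

(* e(2) = C^3 with basis l = ev 0, p_+ = ev 1, p_- = ev 2;
   structure constants [b_i, b_j] *)
Definition e2tab (i j : 'I_3) : 'rV[C]_3 :=
  match nat_of_ord i, nat_of_ord j with
  | 0, 1 => ev 2 1
  | 1, 0 => - ev 2 1
  | 0, 2 => - ev 2 2
  | 2, 0 => ev 2 2
  | _, _ => 0
  end.

Definition e2br (u v : 'rV[C]_3) : 'rV[C]_3 :=
  \sum_(i < 3) \sum_(j < 3) (u 0 i * v 0 j) *: e2tab i j.

(* the 4-dimensional right e(2)-module, basis X1..X4 = ev 0 .. ev 3 *)
Definition modtab (i : 'I_4) (j : 'I_3) : 'rV[C]_4 :=
  match nat_of_ord i, nat_of_ord j with
  | 0, 1 => ev 3 2
  | 0, 2 => - ev 3 3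
  | 1, 2 => - ev 3 2
  | 0, 0 => 2^-1 *: ev 3 0
  | 1, 0 => - (3%:R / 2%:R) *: ev 3 1
  | 2, 0 => - 2^-1 *: ev 3 2
  | 3, 0 => (3%:R / 2%:R) *: ev 3 3
  | _, _ => 0
  end.

Definition modact (m : 'rV[C]_4) (x : 'rV[C]_3) : 'rV[C]_4 :=
  \sum_(i < 4) \sum_(j < 3) (m 0 i * x 0 j) *: modtab i j.

Variable L : lmodType C.
Variable br : L -> L -> L.

Definition bilinear_br : Prop :=
  (forall (a : C) (x y z : L), br (a *: x + y) z = a *: br x z + br y z) /\
  (forall (a : C) (x y z : L), br z (a *: x + y) = a *: br z x + br z y).

Definition right_leibniz : Prop :=
  forall x y z : L, br (br x y) z = br (br x z) y + br x (br y z).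

Definition is_ideal (S : L -> Prop) : Prop :=
  S 0 /\ (forall (a : C) x y, S x -> S y -> S (a *: x + y)) /\
  (forall x y, S x -> S (br x y) /\ S (br y x)).

Definition sq_ideal (x : L) : Prop :=
  forall S : L -> Prop, is_ideal S -> (forall y, S (br y y)) -> S x.

(* the basis l,p+,p-,X1,X2,X3,X4 = b 0, ..., b 6 : structure constants *)
Definition target_tab (b : 'I_7 -> L) (i j : 'I_7) : L :=
  match nat_of_ord i, nat_of_ord j with
  | 0, 1 => b (inord 1)
  | 1, 0 => - b (inord 1)
  | 0, 2 => - b (inord 2)
  | 2, 0 => b (inord 2)
  | 3, 1 => b (inord 5)
  | 3, 2 => - b (inord 6)
  | 4, 2 => - b (inord 5)
  | 3, 0 => 2^-1 *: b (inord 3)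
  | 4, 0 => - (3%:R / 2%:R) *: b (inord 4)
  | 5, 0 => - 2^-1 *: b (inord 5)
  | 6, 0 => (3%:R / 2%:R) *: b (inord 6)
  | _, _ => 0
  end.

Definition is_basis (n : nat) (b : 'I_n -> L) : Prop :=
  (forall c : 'I_n -> C, \sum_(i < n) c i *: b i = 0 -> forall i, c i = 0) /\
  (forall x : L, exists c : 'I_n -> C, x = \sum_(i < n) c i *: b i).

End LeibnizDefs.

(* Main.v *)
Require Import Defs.
From mathcomp Require Import all_boot all_order all_algebra.
From mathcomp Require Import reals complex.
From mathcomp Require Import ring lra zify.
Set Implicit Arguments. Unset Strict Implicit.
Import GRing.Theory Num.Theory.
Local Open Scope ring_scope.

Lemma collapse (C : fieldType) m n p (i0 : 'I_m) (j0 : 'I_n) (f : 'I_m -> 'I_n -> 'rV[C]_p) :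
  \sum_(i < m) \sum_(j < n) (((delta_mx 0 i0 : 'rV[C]_m) 0 i * (delta_mx 0 j0 : 'rV[C]_n) 0 j) *: f i j) = f i0 j0.
Proof.
rewrite (bigD1 i0) //= [X in _ + X]big1 => [|i ne]; last first.
  apply: big1 => j _; rewrite !mxE /=; case: (i =P i0) => [E|_]; last by rewrite mul0r scale0r.
  by rewrite E eqxx in ne.
rewrite addr0 (bigD1 j0) //= [X in _ + X]big1 => [|j ne]; last first.
  rewrite !mxE /=; case: (j =P j0) => [E|_]; last by rewrite mulr0 scale0r.
  by rewrite E eqxx in ne.
by rewrite !mxE !eqxx /= mulr1 scale1r !addr0.
Qed.

Lemma sum_inord (V : nmodType) n (F : 'I_n.+1 -> V) :
  \sum_(i < n.+1) F i = \sum_(k <- iota 0 n.+1) F (inord k).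
Proof.
have -> : \sum_(i < n.+1) F i = \sum_(i < n.+1) F (inord i).
  by apply: eq_bigr => i _; rewrite inord_val.
by rewrite -(big_mkord xpredT (fun k => F (inord k))) /index_iota subn0.
Qed.

Definition lam (C : fieldType) (k : 'I_4) : C :=
  nth 0 [:: 2^-1; -(3%:R/2%:R); -2^-1; 3%:R/2%:R] k.

Lemma lam_ne (C : numFieldType) (c : int) (k : 'I_4) : lam C k + c%:~R != 0.
Proof.
have h2 : (2 : C) != 0 by rewrite pnatr_eq0.
case: k => [[|[|[|[|k]]]] Hk] //; rewrite /lam /=.
- have -> : 2^-1 + c%:~R = (1 + 2 * c)%:~R / 2 :> C.
    rewrite rmorphD rmorphM /=. field; done.
  rewrite mulf_eq0 negb_or invr_eq0 h2 andbT intr_eq0; lia.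
- have -> : -(3%:R/2%:R) + c%:~R = (-3 + 2 * c)%:~R / 2 :> C.
    rewrite rmorphD rmorphM /=. field; done.
  rewrite mulf_eq0 negb_or invr_eq0 h2 andbT intr_eq0; lia.
- have -> : -2^-1 + c%:~R = (-1 + 2 * c)%:~R / 2 :> C.
    rewrite rmorphD rmorphM /=. field; done.
  rewrite mulf_eq0 negb_or invr_eq0 h2 andbT intr_eq0; lia.
- have -> : 3%:R/2%:R + c%:~R = (3 + 2 * c)%:~R / 2 :> C.
    rewrite rmorphD rmorphM /=. field; done.
  rewrite mulf_eq0 negb_or invr_eq0 h2 andbT intr_eq0; lia.
Qed.

Section Lin.
Lemma lin0 (K : fieldType) (U V : lmodType K) (f : U -> V) :
  (forall a x y, f (a *: x + y) = a *: f x + f y) -> f 0 = 0.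
Proof. by move=> H; have := H (-1) 0 0; rewrite scaler0 addr0 scaleN1r addNr. Qed.
Lemma linD (K : fieldType) (U V : lmodType K) (f : U -> V) :
  (forall a x y, f (a *: x + y) = a *: f x + f y) -> forall x y, f (x + y) = f x + f y.
Proof. by move=> H x y; have := H 1 x y; rewrite !scale1r. Qed.
Lemma linZ (K : fieldType) (U V : lmodType K) (f : U -> V) :
  (forall a x y, f (a *: x + y) = a *: f x + f y) -> forall a x, f (a *: x) = a *: f x.
Proof. by move=> H a x; have := H a x 0; rewrite addr0 (lin0 H) addr0. Qed.
Lemma linN (K : fieldType) (U V : lmodType K) (f : U -> V) :
  (forall a x y, f (a *: x + y) = a *: f x + f y) -> forall x, f (- x) = - f x.
Proof. by move=> H x; rewrite -scaleN1r (linZ H) scaleN1r. Qed.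
Lemma linB (K : fieldType) (U V : lmodType K) (f : U -> V) :
  (forall a x y, f (a *: x + y) = a *: f x + f y) -> forall x y, f (x - y) = f x - f y.
Proof. by move=> H x y; rewrite (linD H) (linN H). Qed.
End Lin.

Lemma modl (C : fieldType) (v : 'rV[C]_4) : modact v (ev C 2 0) = \row_k (lam C k * v 0 k).
Proof.
rewrite [RHS]row_sum_delta /modact; apply: eq_bigr => i _.
rewrite mxE (bigD1 (inord 0)) //= [X in _ + X]big1 => [|j ne]; last first.
  rewrite /ev !mxE /=; case: (j =P inord 0) => [E|_]; last by rewrite mulr0 scale0r.
  by rewrite E eqxx in ne.
rewrite addr0 /ev mxE !eqxx /= mulr1 [lam C i * _]mulrC -scalerA; congr (_ *: _).
by case: i => [[|[|[|[|i]]]] Hi] //; rewrite /modtab inordK //= /ev;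
  congr (_ *: delta_mx _ _); apply: val_inj; rewrite /= inordK.
Qed.

Lemma modev (C : fieldType) (i j : nat) :
  modact (ev C 3 i) (ev C 2 j) = modtab C (inord i) (inord j).
Proof. by rewrite /modact /ev collapse. Qed.

Lemma e2ev (C : fieldType) (i j : nat) :
  e2br (ev C 2 i) (ev C 2 j) = e2tab C (inord i) (inord j).
Proof. by rewrite /e2br /ev collapse. Qed.

Lemma e2br0l (C : fieldType) (v : 'rV[C]_3) : e2br 0 v = 0.
Proof. by rewrite /e2br big1 // => i _; rewrite big1 // => j _; rewrite mxE mul0r scale0r. Qed.

Lemma rowsum3 (C : fieldType) (a b c : C) :
  a *: ev C 2 0 + b *: ev C 2 1 + c *: ev C 2 2 = \row_j nth 0 [:: a; b; c] j.
Proof.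
by rewrite [RHS]row_sum_delta sum_inord /= !big_cons big_nil !mxE !inordK //= addr0 !addrA.
Qed.

Lemma rowsum4 (C : fieldType) (a b c d : C) :
  a *: ev C 3 0 + b *: ev C 3 1 + c *: ev C 3 2 + d *: ev C 3 3 = \row_j nth 0 [:: a; b; c; d] j.
Proof.
by rewrite [RHS]row_sum_delta sum_inord /= !big_cons big_nil !mxE !inordK //= addr0 !addrA.
Qed.

Theorem mainTheorem6 (R : realType) (L : lmodType (complex R))
  (br : L -> L -> L) :
  bilinear_br br ->
  right_leibniz br ->
  (exists (pi : L -> 'rV[complex R]_3) (phi : L -> 'rV[complex R]_4),
     (* pi induces a Lie algebra isomorphism L/I ~= e(2) *)
     (forall (a : complex R) x y, pi (a *: x + y) = a *: pi x + pi y) /\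
     (forall u, exists x, pi x = u) /\
     (forall x, pi x = 0 <-> sq_ideal br x) /\
     (forall x y, pi (br x y) = e2br (pi x) (pi y)) /\
     (* phi restricts to a module isomorphism I ~= the given module *)
     (forall (a : complex R) x y, phi (a *: x + y) = a *: phi x + phi y) /\
     (forall x y, sq_ideal br x -> sq_ideal br y -> phi x = phi y -> x = y) /\
     (forall m, exists x, sq_ideal br x /\ phi x = m) /\
     (forall i x, sq_ideal br i -> phi (br i x) = modact (phi i) (pi x))) ->
  exists b : 'I_7 -> L,
    is_basis b /\
    (forall k : 'I_7, (3 <= k)%N -> sq_ideal br (b k)) /\
    (forall i j : 'I_7, br (b i) (b j) = target_tab b i j).
Proof.
move=> [brL brR] leib [pi [phi [piL [piS [piK [piB [phiL [phiI [phiS phiA]]]]]]]]].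
set I := sq_ideal br.
have br0l : forall z, br 0 z = 0 by move=> z; exact: (lin0 (fun a x y => brL a x y z)).
have br0r : forall z, br z 0 = 0 by move=> z; exact: (lin0 (fun a x y => brR a x y z)).
have brDl : forall x y z, br (x + y) z = br x z + br y z.
  by move=> x y z; exact: (linD (fun a x y => brL a x y z)).
have brDr : forall x y z, br z (x + y) = br z x + br z y.
  by move=> x y z; exact: (linD (fun a x y => brR a x y z)).
have brZl : forall a x z, br (a *: x) z = a *: br x z.
  by move=> a x z; exact: (linZ (fun a x y => brL a x y z)).
have brNl : forall x z, br (- x) z = - br x z.
  by move=> x z; exact: (linN (fun a x y => brL a x y z)).
have brBl : forall x y z, br (x - y) z = br x z - br y z.
  by move=> x y z; exact: (linB (fun a x y => brL a x y z)).
have pi0 := lin0 piL; have piD := linD piL; have piZ := linZ piL;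
  have piN := linN piL; have piB' := linB piL.
have phi0 := lin0 phiL; have phiD := linD phiL; have phiZ := linZ phiL;
  have phiN := linN phiL; have phiB := linB phiL.
have ann : forall x, I x -> forall y, br y x = 0.
  move=> x Ix; apply: (Ix (fun v => forall y, br y v = 0)).
    split; first by move=> y; rewrite br0r.
    split; first by move=> a u v Hu Hv y; rewrite brR Hu Hv scaler0 addr0.
    move=> u v Hu; split => y.
      by move: (leib y u v); rewrite Hu br0l Hu add0r => <-.
    by rewrite Hu br0r.
  move=> y w; move: (leib w y y); rewrite -{1}[br (br w y) y]addr0 => /addrI <-.
  done.
have Ipi : forall x, I x <-> pi x = 0 by move=> x; split => /piK.
have Ibr : forall x y, I x -> I (br x y).
  by move=> x y /Ipi Hx; apply/Ipi; rewrite piB Hx e2br0l.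
have Ilin : forall a x y, I x -> I y -> I (a *: x + y).
  by move=> a x y /Ipi Hx /Ipi Hy; apply/Ipi; rewrite piL Hx Hy scaler0 addr0.
have I0 : I 0 by apply/Ipi.
have IZ : forall a x, I x -> I (a *: x) by move=> a x Hx; rewrite -[_ *: _]addr0; apply: Ilin.
have ID : forall x y, I x -> I y -> I (x + y) by move=> x y Hx Hy; rewrite -[x]scale1r; apply: Ilin.
have IN : forall x, I x -> I (- x) by move=> x Hx; rewrite -scaleN1r; apply: IZ.
have IB : forall x y, I x -> I y -> I (x - y) by move=> x y Hx Hy; apply: ID => //; apply: IN.
have brNr : forall x z, br z (- x) = - br z x.
  by move=> x z; exact: (linN (fun a x y => brR a x y z)).
have [l0 pl0] := piS (ev _ 2 0).
have [p0 pp0] := piS (ev _ 2 1).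
have [m0 pm0] := piS (ev _ 2 2).
have [x0 [Ix0 fx0]] := phiS (ev _ 3 0).
have [x1 [Ix1 fx1]] := phiS (ev _ 3 1).
have [x2 [Ix2 fx2]] := phiS (ev _ 3 2).
have [x3 [Ix3 fx3]] := phiS (ev _ 3 3).
have actl : forall d, I d -> phi (br d l0) = \row_k (lam _ k * phi d 0 k).
  by move=> d Id; rewrite phiA // pl0 modl.
have uniq : forall (c : int) d, I d -> br d l0 + c%:~R *: d = 0 -> d = 0.
  move=> c d Id E; apply: phiI => //.
  have : phi (br d l0 + c%:~R *: d) = 0 by rewrite E phi0.
  rewrite phiD phiZ actl // phi0 => E2; apply/rowP => k; rewrite mxE.
  have := congr1 (fun M : 'rV[complex R]_4 => M 0 k) E2; rewrite !mxE -mulrDl => /eqP.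
  by rewrite mulf_eq0 (negbTE (lam_ne _ c k)) /= => /eqP.
have solve : forall (c : int) d, I d -> exists v, I v /\ br v l0 + c%:~R *: v = d.
  move=> c d Id.
  have [v [Iv fv]] := phiS (\row_k (phi d 0 k / (lam _ k + c%:~R))).
  exists v; split => //; apply: phiI => //; first by apply: ID; [apply: Ibr | apply: IZ].
  rewrite phiD phiZ actl // fv; apply/rowP => k; rewrite !mxE -mulrDl mulrC divfK //.
  exact: lam_ne.
have Ia : I (br l0 l0) by apply/Ipi; rewrite piB pl0 e2ev /e2tab !inordK.
have [u [Iu Eu]] := solve 0 (- br l0 l0) (IN _ Ia).
rewrite mulr0z scale0r addr0 in Eu.
have Ib : I (br p0 l0 + p0).
  by apply/Ipi; rewrite piD piB pl0 pp0 e2ev /e2tab !inordK //= addNr.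
have [v [Iv Ev]] := solve 1 (- (br p0 l0 + p0)) (IN _ Ib).
rewrite mulr1z scale1r in Ev.
have Ic : I (br m0 l0 - m0).
  by apply/Ipi; rewrite piB' piB pl0 pm0 e2ev /e2tab !inordK //= subrr.
have [w [Iw Ew]] := solve (-1) (- (br m0 l0 - m0)) (IN _ Ic).
rewrite mulrN1z scaleN1r in Ew.
pose l := l0 + u; pose p := p0 + v; pose m := m0 + w.
have brl : forall x, br x l = br x l0 by move=> x; rewrite brDr (ann u Iu) addr0.
have pl : pi l = ev _ 2 0 by rewrite piD pl0 (piK u).2 // addr0.
have pp : pi p = ev _ 2 1 by rewrite piD pp0 (piK v).2 // addr0.
have pm : pi m = ev _ 2 2 by rewrite piD pm0 (piK w).2 // addr0.
have Hll : br l l = 0 by rewrite brl brDl Eu addrN.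
have Hpl : br p l = - p.
  rewrite brl brDl (_ : br v l0 = - (br p0 l0 + p0) - v); last by rewrite -Ev addrK.
  by rewrite /p !opprD !addrA addrN add0r.
have Hml : br m l = m.
  rewrite brl brDl (_ : br w l0 = - (br m0 l0 - m0) + w); last by rewrite -Ew subrK.
  by rewrite /m !opprD opprK !addrA addrN add0r.
have two : (2%:~R : R[i]) = 1 + 1 by rewrite -mulr2n.
have fixl : forall (c : int) d, I d -> br d l + c%:~R *: d = 0 -> d = 0.
  by move=> c d Id E; apply: (uniq c) => //; rewrite -brl.
have Hlp : br l p = p.
  apply: subr0_eq; apply: (fixl 1).
    by apply/Ipi; rewrite piB' piB pl pp e2ev /e2tab !inordK //= subrr.
  rewrite mulr1z scale1r brBl leib Hll br0l Hpl brNr add0r opprK.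
  by rewrite [- _ + _]addrC -opprB subrr.
have Hlm : br l m = - m.
  apply/eqP; rewrite -addr_eq0; apply/eqP; apply: (fixl (-1)).
    by apply/Ipi; rewrite piD piB pl pm e2ev /e2tab !inordK //= addNr.
  by rewrite mulrN1z scaleN1r brDl leib Hll br0l Hml add0r subrr.
have Hpp : br p p = 0.
  apply: (fixl 2).
    by apply/Ipi; rewrite piB pp e2ev /e2tab !inordK.
  by rewrite two scalerDl scale1r leib Hpl brNl brNr -opprD addNr.
have Hmm : br m m = 0.
  apply: (fixl (-2)).
    by apply/Ipi; rewrite piB pm e2ev /e2tab !inordK.
  by rewrite mulrNz two scaleNr scalerDl scale1r leib Hml subrr.
have Hpm : br p m = 0.
  apply: (fixl 0).
    by apply/Ipi; rewrite piB pp pm e2ev /e2tab !inordK.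
  by rewrite mulr0z scale0r addr0 leib Hpl Hml brNl addNr.
have Hmp : br m p = 0.
  apply: (fixl 0).
    by apply/Ipi; rewrite piB pp pm e2ev /e2tab !inordK.
  by rewrite mulr0z scale0r addr0 leib Hpl Hml brNr subrr.
have Xfact : forall x t y (j : nat), I x -> I t -> pi y = ev _ 2 j ->
    phi t = modact (phi x) (ev _ 2 j) -> br x y = t.
  by move=> x t y j Ix It py E; apply: phiI => //; [exact: Ibr | rewrite phiA // py].
have Il : I (x0 + 0) by rewrite addr0.
exists (fun i : 'I_7 => nth 0 [:: l; p; m; x0; x1; x2; x3] i).
split; last split.
- split.
    move=> c E.
    rewrite sum_inord /= !big_cons big_nil addr0 !inordK //= in E.
    have E1 := congr1 pi E.
    rewrite !piD !piZ pl pp pm (piK x0).2 // (piK x1).2 // (piK x2).2 // (piK x3).2 //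
      pi0 !scaler0 !addr0 !addrA rowsum3 in E1.
    have h3 := fun k => congr1 (fun M : 'rV[R[i]]_3 => M 0 (inord k)) E1.
    have c0 : c (inord 0) = 0 by have := h3 0; rewrite !mxE inordK.
    have c1 : c (inord 1) = 0 by have := h3 1; rewrite !mxE inordK.
    have c2 : c (inord 2) = 0 by have := h3 2; rewrite !mxE inordK.
    rewrite c0 c1 c2 !scale0r !add0r in E.
    have E2 := congr1 phi E.
    rewrite !phiD !phiZ fx0 fx1 fx2 fx3 phi0 !addrA rowsum4 in E2.
    have h4 := fun k => congr1 (fun M : 'rV[R[i]]_4 => M 0 (inord k)) E2.
    have c3 : c (inord 3) = 0 by have := h4 0; rewrite !mxE inordK.
    have c4 : c (inord 4) = 0 by have := h4 1; rewrite !mxE inordK.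
    have c5 : c (inord 5) = 0 by have := h4 2; rewrite !mxE inordK.
    have c6 : c (inord 6) = 0 by have := h4 3; rewrite !mxE inordK.
    move=> i; rewrite -(inord_val i); have := ltn_ord i.
    by case: (nat_of_ord i) => [|[|[|[|[|[|[|k]]]]]]].
  move=> x.
  set a := pi x.
  set S := a 0 (inord 0) *: l + (a 0 (inord 1) *: p + a 0 (inord 2) *: m).
  pose y := x - S.
  have Iy : I y.
    apply/Ipi; rewrite /y piB' /S !piD !piZ pl pp pm addrA rowsum3.
    apply/eqP; rewrite subr_eq0; apply/eqP; apply/rowP => j; rewrite mxE.
    by case: j => [[|[|[|j]]] Hj] //=; congr (a 0 _); apply: val_inj; rewrite /= inordK.
  pose d := phi y.
  have Ey : y = d 0 (inord 0) *: x0 + (d 0 (inord 1) *: x1 + (d 0 (inord 2) *: x2 + d 0 (inord 3) *: x3)).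
    apply: phiI => //.
      by apply: (Ilin) => //; apply: (Ilin) => //; apply: (Ilin) => //; apply: (IZ).
    rewrite !phiD !phiZ fx0 fx1 fx2 fx3 !addrA rowsum4.
    apply/rowP => j; rewrite [RHS]mxE.
    by case: j => [[|[|[|[|j]]]] Hj] //; rewrite [RHS]/=; (congr (_ 0 _); [rewrite /d /y phiD | apply: val_inj; rewrite /= inordK]).
  exists (fun i : 'I_7 => nth 0 [:: a 0 (inord 0); a 0 (inord 1); a 0 (inord 2);
     d 0 (inord 0); d 0 (inord 1); d 0 (inord 2); d 0 (inord 3)] i).
  rewrite sum_inord /= !big_cons big_nil addr0 !inordK //= -Ey /y.
  have -> : forall T U V W : L, T + (U + (V + W)) = (T + (U + V)) + W by move=> *; rewrite !addrA.
  by rewrite -/S addrC subrK.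
- by case=> [[|[|[|[|[|[|[|k]]]]]]] Hk].
move=> i j.
case: i => [[|[|[|[|[|[|[|i]]]]]]] Hi] //; case: j => [[|[|[|[|[|[|[|j]]]]]]] Hj] //;
  rewrite /target_tab /= ?inordK //=.
all: first [ by rewrite ?Hll ?Hlp ?Hlm ?Hpl ?Hpp ?Hpm ?Hml ?Hmp ?Hmm
           | by apply: ann
           | (apply: Xfact; [assumption | do ?[apply: IZ | apply: IN]; assumption
             | first [exact: pl | exact: pp | exact: pm]
             | by rewrite ?phiZ ?phiN ?phi0 ?fx0 ?fx1 ?fx2 ?fx3 modev /modtab !inordK]) ].
Qed.
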